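(* Let $\mathcal{H}=\mathbb{C}^2$ and consider on $\mathcal{H}^{\otimes3}$ (factors $A,B,C$) the Hermitian operator $$w=a\mathbb{I}+bV_{(AB)}+cV_{(AC)}+dV_{(BC)}+\frac{if}{2}\big(V_{(ABC)}-V_{(CBA)}\big),\qquad a,b,c,d,f\in\mathbb{R}.$$ If $w$ is local-positive, then $w'=a\mathbb{I}+bV_{(AB)}+cV_{(AC)}+dV_{(BC)}$ is local-positive, and $w$ and $w'$ have the same bipartite reductions $\operatorname{Tr}_A$, $\operatorname{Tr}_B$, $\operatorname{Tr}_C$.
   Context: $V_{(XY)}$ denotes the operator swapping tensor factors $X$ and $Y$; $V_{(ABC)}$ denotes the operator permuting the three factors cyclically and $V_{(CBA)}=V_{(ABC)}^{\dagger}$ the inverse cyclic permutation. An operator $M$ on $\mathcal{H}^{\otimes3}$ is local-positive (with respect to the three factors) if $\langle\psi_1\psi_2\psi_3|M|\psi_1\psi_2\psi_3\rangle\ge0$ for all unit vectors $\psi_1,\psi_2,\psi_3\in\mathcal{H}$. *)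

(* Defs.v *)
(* Complex scalars: an arbitrary numClosedFieldType C
   (the complex numbers are the intended instance). *)
From HB Require Import structures.
From mathcomp Require Import all_boot all_order all_algebra.
Set Implicit Arguments. Unset Strict Implicit. Unset Printing Implicit Defensive.
Import Order.TTheory GRing.Theory Num.Theory Num.Def.
Local Open Scope ring_scope.

(* Computational basis of H^{(x)3}, H = C^2, factors ordered (A, B, C). *)
Definition idx3 := ('I_2 * 'I_2 * 'I_2)%type.
Definition idx2 := ('I_2 * 'I_2)%type.

(* An operator on H^{(x)3} given by its matrix entries M i j = <i|M|j>. *)
Definition op3 (C : Type) := idx3 -> idx3 -> C.
Definition op2 (C : Type) := idx2 -> idx2 -> C.

Section Ops.
Variable C : numClosedFieldType.

(* operator induced by a map on basis vectors: P |j> = |s j> *)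
Definition permop (s : idx3 -> idx3) : op3 C := fun i j => (i == s j)%:R.

Definition Id3 : op3 C := permop id.
Definition V_AB : op3 C := permop (fun j => (j.1.2, j.1.1, j.2)).
Definition V_AC : op3 C := permop (fun j => (j.2, j.1.2, j.1.1)).
Definition V_BC : op3 C := permop (fun j => (j.1.1, j.2, j.1.2)).
(* cyclic permutation of the factors A -> B -> C -> A:
   V_(ABC) |x y z> = |z x y>, and V_(CBA) = V_(ABC)^dagger. *)
Definition V_ABC : op3 C := permop (fun j => (j.2, j.1.1, j.1.2)).
Definition V_CBA : op3 C := permop (fun j => (j.1.2, j.2, j.1.1)).

Definition opadd (M N : op3 C) : op3 C := fun i j => M i j + N i j.
Definition opscale (k : C) (M : op3 C) : op3 C := fun i j => k * M i j.

Definition unit_vec (v : 'I_2 -> C) : Prop := \sum_(k < 2) v k * (v k)^* = 1.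

Definition prodvec (v1 v2 v3 : 'I_2 -> C) (i : idx3) : C :=
  v1 i.1.1 * v2 i.1.2 * v3 i.2.

Definition expval (M : op3 C) (psi : idx3 -> C) : C :=
  \sum_(i : idx3) \sum_(j : idx3) (psi i)^* * M i j * psi j.

Definition local_positive (M : op3 C) : Prop :=
  forall v1 v2 v3 : 'I_2 -> C, unit_vec v1 -> unit_vec v2 -> unit_vec v3 ->
    0 <= expval M (prodvec v1 v2 v3).

(* partial traces; the result acts on the two remaining factors in order *)
Definition ptrA (M : op3 C) : op2 C :=
  fun p q => \sum_(x < 2) M (x, p.1, p.2) (x, q.1, q.2).
Definition ptrB (M : op3 C) : op2 C :=
  fun p q => \sum_(x < 2) M (p.1, x, p.2) (q.1, x, q.2).
Definition ptrC (M : op3 C) : op2 C :=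
  fun p q => \sum_(x < 2) M (p.1, p.2, x) (q.1, q.2, x).

Definition w_prime (a b c d : C) : op3 C :=
  opadd (opadd (opadd (opscale a Id3) (opscale b V_AB)) (opscale c V_AC))
        (opscale d V_BC).

Definition w_full (a b c d f : C) : op3 C :=
  opadd (w_prime a b c d)
        (opscale ('i * f / 2%:R) (opadd V_ABC (opscale (-1) V_CBA))).
End Ops.

(* Main.v *)
Require Import Defs.
From HB Require Import structures.
From mathcomp Require Import all_boot all_order all_algebra.
From mathcomp Require Import ring.
Import Order.TTheory GRing.Theory Num.Theory Num.Def.
Local Open Scope ring_scope.

Section Aux.
Variable C : numClosedFieldType.
Implicit Types (M N : op3 C) (psi : idx3 -> C).

Lemma expval_add M N psi : expval (opadd M N) psi = expval M psi + expval N psi.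
Proof.
rewrite /expval -big_split; apply: eq_bigr => i _.
rewrite -big_split; apply: eq_bigr => j _; by rewrite /opadd mulrDr mulrDl.
Qed.

Lemma expval_scale k M psi : expval (opscale k M) psi = k * expval M psi.
Proof.
rewrite /expval mulr_sumr; apply: eq_bigr => i _.
rewrite mulr_sumr; apply: eq_bigr => j _; rewrite /opscale; ring.
Qed.

Lemma expval_perm (s : idx3 -> idx3) psi :
  expval (permop C s) psi = \sum_j (psi (s j))^* * psi j.
Proof.
rewrite /expval exchange_big; apply: eq_bigr => j _.
rewrite (bigD1 (s j)) //= /permop eqxx big1 ?addr0 ?mulr1 //.
by move=> i /negbTE ->; rewrite mulr0 mul0r.
Qed.

Lemma expval_inv (s t : idx3 -> idx3) psi : cancel s t -> cancel t s ->
  expval (permop C t) psi = (expval (permop C s) psi)^*.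
Proof.
move=> st ts; rewrite !expval_perm rmorph_sum /=.
rewrite (reindex_inj (can_inj st)) /=; apply: eq_bigr => i _.
by rewrite st rmorphM /= conjCK mulrC.
Qed.

Lemma expval_conj (s : idx3 -> idx3) psi :
  expval (permop C s) (fun i => (psi i)^*) = (expval (permop C s) psi)^*.
Proof.
rewrite !expval_perm rmorph_sum /=; apply: eq_bigr => i _.
by rewrite rmorphM.
Qed.

Lemma expval_ext M psi phi : (forall i, psi i = phi i) ->
  expval M psi = expval M phi.
Proof.
move=> e; apply: eq_bigr => i _; apply: eq_bigr => j _; by rewrite !e.
Qed.

Lemma ord2P (x : 'I_2) : x = ord0 \/ x = ord_max.
Proof. case: x => [[|[|//]] H]; [left|right]; exact: val_inj. Qed.

End Aux.

Theorem mainTheorem11 (C : numClosedFieldType) (a b c d f : C)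
  (ha : a \is Num.real) (hb : b \is Num.real) (hc : c \is Num.real)
  (hd : d \is Num.real) (hf : f \is Num.real) :
  local_positive (w_full a b c d f) ->
  local_positive (w_prime a b c d) /\
  (forall p q, ptrA (w_full a b c d f) p q = ptrA (w_prime a b c d) p q) /\
  (forall p q, ptrB (w_full a b c d f) p q = ptrB (w_prime a b c d) p q) /\
  (forall p q, ptrC (w_full a b c d f) p q = ptrC (w_prime a b c d) p q).
Proof.
move=> H; split; last first.
  split; [|split] => -[p1 p2] [q1 q2];
  case: (ord2P p1) => ->; case: (ord2P p2) => ->; case: (ord2P q1) => ->;
  case: (ord2P q2) => ->;
  rewrite /ptrA /ptrB /ptrC !big_ord_recr !big_ord0 /w_full /w_prime /opadd /opscale
    /Id3 /V_AB /V_AC /V_BC /V_ABC /V_CBA /permop /=; ring.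
move=> v1 v2 v3 u1 u2 u3.
pose cv (v : 'I_2 -> C) := fun k => (v k)^*.
have uc : forall v, unit_vec v -> unit_vec (cv v).
  move=> v; rewrite /unit_vec /cv => <-; apply: eq_bigr => k _.
  by rewrite conjCK mulrC.
have H1 := H v1 v2 v3 u1 u2 u3.
have H2 := H _ _ _ (uc _ u1) (uc _ u2) (uc _ u3).
set psi := prodvec v1 v2 v3 in H1 *.
have e : forall i, prodvec (cv v1) (cv v2) (cv v3) i = (fun i => (psi i)^*) i.
  by move=> i; rewrite /psi /prodvec /cv !rmorphM.
rewrite (@expval_ext _ _ _ _ e) in H2.
move: H1 H2; rewrite /w_full /w_prime !(expval_add, expval_scale).
rewrite /Id3 /V_AB /V_AC /V_BC /V_ABC /V_CBA !expval_conj.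
set s := (fun j : idx3 => (j.2, j.1.1, j.1.2)).
set t := (fun j : idx3 => (j.1.2, j.2, j.1.1)).
have st : cancel s t by case=> [[]].
have ts : cancel t s by case=> [[]].
rewrite (@expval_inv C s t psi st ts).
have inv : forall u : idx3 -> idx3, involutive u ->
  (expval (permop C u) psi)^* = expval (permop C u) psi.
  by move=> u hu; rewrite -(@expval_inv C u u psi hu hu).
rewrite (inv id) // (inv (fun j : idx3 => (j.1.2, j.1.1, j.2))); last by case=> [[]].
rewrite (inv (fun j : idx3 => (j.2, j.1.2, j.1.1))); last by case=> [[]].
rewrite (inv (fun j : idx3 => (j.1.1, j.2, j.1.2))); last by case=> [[]].
rewrite conjCK.
set X := _ + d * _.
move=> H1 H2.
have : 0 <= X *+ 2.
  have -> : X *+ 2 = (X + ('i * f / 2%:R) * (expval (permop C s) psi +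
     -1 * (expval (permop C s) psi)^*)) + (X + ('i * f / 2%:R) *
     ((expval (permop C s) psi)^* + -1 * expval (permop C s) psi)) by rewrite mulr2n; ring.
  exact: addr_ge0.
by rewrite pmulrn_lge0.
Qed.
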